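(* Let $(T,\eta,\mu,T_0,m_0)$ be an ideal monad on a category $\mathcal{C}$ with finite coproducts. Then the Eilenberg–Moore category $\mathbf{EM}(T)$ is isomorphic to the full subcategory of the category $\mathbf{Alg}(T_0)$ of functor $T_0$-algebras consisting of those $a:T_0X\to X$ satisfying $a\circ m_{0,X}=a\circ T_0[\mathrm{id}_X,a]$ (as maps $T_0TX=T_0(X+T_0X)\to X$).
   Context: An ideal monad $(T,\eta,\mu,T_0,m_0)$ on a category with finite coproducts consists of a monad $(T,\eta,\mu)$ with $T=\mathrm{Id}+T_0$ for an endofunctor $T_0$, unit $\eta=\mathrm{inl}:\mathrm{Id}\to\mathrm{Id}+T_0$, and a natural transformation $m_0:T_0T\to T_0$ such that $\mu\circ\mathrm{inr}_T=\mathrm{inr}\circ m_0$, equivalently $\mu=[\mathrm{id}_{\mathrm{Id}+T_0},\ \mathrm{inr}\circ m_0]$. A functor $T_0$-algebra is a morphism $a:T_0X\to X$; a morphism of such algebras $a\to b$ is $f:X\to Y$ with $f\circ a=b\circ T_0f$. *)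

(* Defs.v *)
From Stdlib Require Import ProofIrrelevance.

Set Implicit Arguments.
Unset Strict Implicit.

Record Category := {
  Ob :> Type;
  Hom : Ob -> Ob -> Type;
  idm : forall A, Hom A A;
  comp : forall A B C, Hom B C -> Hom A B -> Hom A C;
  comp_id_l : forall A B (f : Hom A B), comp (idm B) f = f;
  comp_id_r : forall A B (f : Hom A B), comp f (idm A) = f;
  comp_assoc : forall A B C D (h : Hom C D) (g : Hom B C) (f : Hom A B),
      comp h (comp g f) = comp (comp h g) f
}.
Arguments Hom {c} _ _.
Arguments idm {c} _.
Arguments comp {c A B C} _ _.

Notation "g \oc f" := (comp g f) (at level 40, left associativity).

Record Functor (C D : Category) := {
  fobj :> C -> D;
  fmap : forall A B, @Hom C A B -> @Hom D (fobj A) (fobj B);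
  fmap_id : forall A, fmap (idm A) = idm (fobj A);
  fmap_comp : forall A B E (g : @Hom C B E) (f : @Hom C A B),
      fmap (g \oc f) = fmap g \oc fmap f
}.
Arguments fmap {C D} _ {A B} _.

Definition Id_functor (C : Category) : Functor C C.
Proof.
  refine {| fobj := fun X => X; fmap := fun A B f => f |}; reflexivity.
Defined.

Definition comp_functor (C D E : Category) (G : Functor D E) (F : Functor C D)
  : Functor C E.
Proof.
  refine {| fobj := fun X => G (F X); fmap := fun A B f => fmap G (fmap F f) |}.
  - intros A. rewrite !fmap_id. reflexivity.
  - intros A B E' g f. rewrite !fmap_comp. reflexivity.
Defined.

Definition cast_hom (C : Category) (x' y' x y : C) (ex : x' = x) (ey : y' = y)
  (h : Hom x' y') : Hom x y :=
  match ex in _ = a, ey in _ = b return Hom a b with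
  | eq_refl, eq_refl => h
  end.

Definition functor_eq (C D : Category) (F G : Functor C D) : Prop :=
  exists e : forall X, F X = G X,
    forall A B (f : @Hom C A B), cast_hom (e A) (e B) (fmap F f) = fmap G f.

Definition cat_isomorphic (C D : Category) : Prop :=
  exists (F : Functor C D) (G : Functor D C),
    functor_eq (comp_functor G F) (Id_functor C) /\
    functor_eq (comp_functor F G) (Id_functor D).

Record FinCoprodCat := {
  fc_cat :> Category;
  initial : fc_cat;
  init_map : forall X : fc_cat, Hom initial X;
  init_map_unique : forall X (f : Hom initial X), f = init_map X;
  coprod : fc_cat -> fc_cat -> fc_cat;
  inl : forall X Y : fc_cat, Hom X (coprod X Y);
  inr : forall X Y : fc_cat, Hom Y (coprod X Y);
  copair : forall X Y Z : fc_cat, Hom X Z -> Hom Y Z -> Hom (coprod X Y) Z;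
  copair_inl : forall X Y Z (f : Hom X Z) (g : Hom Y Z), copair f g \oc inl X Y = f;
  copair_inr : forall X Y Z (f : Hom X Z) (g : Hom Y Z), copair f g \oc inr X Y = g;
  copair_unique : forall X Y Z (f : Hom X Z) (g : Hom Y Z) (h : Hom (coprod X Y) Z),
      h \oc inl X Y = f -> h \oc inr X Y = g -> h = copair f g
}.
Arguments coprod {_} _ _.
Arguments inl {_} _ _.
Arguments inr {_} _ _.
Arguments copair {_ X Y Z} _ _.

Section IdealMonad.
Variable C : FinCoprodCat.

(* T = Id + T0 : on objects X |-> X + T0 X, on morphisms f |-> f + T0 f. *)
Definition Tobj (T0 : Functor C C) (X : C) : C := coprod X (T0 X).
Definition Tmap (T0 : Functor C C) (X Y : C) (f : Hom X Y) : Hom (Tobj T0 X) (Tobj T0 Y) :=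
  copair (inl Y (T0 Y) \oc f) (inr Y (T0 Y) \oc fmap T0 f).

(* An ideal monad (T, eta, mu, T0, m0) with T = Id + T0 and eta = inl. *)
Record IdealMonad := {
  T0 : Functor C C;
  mu : forall X : C, Hom (Tobj T0 (Tobj T0 X)) (Tobj T0 X);
  m0 : forall X : C, Hom (T0 (Tobj T0 X)) (T0 X);
  mu_nat : forall X Y (f : Hom X Y),
      mu Y \oc Tmap T0 (Tmap T0 f) = Tmap T0 f \oc mu X;
  m0_nat : forall X Y (f : Hom X Y),
      m0 Y \oc fmap T0 (Tmap T0 f) = fmap T0 f \oc m0 X;
  mu_eta_l : forall X, mu X \oc inl (Tobj T0 X) (T0 (Tobj T0 X)) = idm (Tobj T0 X);
  mu_eta_r : forall X, mu X \oc Tmap T0 (inl X (T0 X)) = idm (Tobj T0 X);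
  mu_assoc : forall X, mu X \oc mu (Tobj T0 X) = mu X \oc Tmap T0 (mu X);
  mu_inr : forall X, mu X \oc inr (Tobj T0 X) (T0 (Tobj T0 X)) = inr X (T0 X) \oc m0 X
}.

Variable M : IdealMonad.
Let T0M := T0 M.
Let TX (X : C) := Tobj T0M X.

Definition is_EM_alg (X : C) (a : Hom (TX X) X) : Prop :=
  a \oc inl X (T0M X) = idm X /\ a \oc mu M X = a \oc Tmap T0M a.

Definition EM_ob := { X : C & { a : Hom (TX X) X | is_EM_alg a } }.
Definition EM_car (A : EM_ob) : C := projT1 A.
Definition EM_str (A : EM_ob) : Hom (TX (EM_car A)) (EM_car A) := proj1_sig (projT2 A).

Definition EM_hom (A B : EM_ob) :=
  { f : Hom (EM_car A) (EM_car B) | f \oc EM_str A = EM_str B \oc Tmap T0M f }.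

Definition is_ideal_alg (X : C) (a : Hom (T0M X) X) : Prop :=
  a \oc m0 M X = a \oc fmap T0M (copair (idm X) a).

Definition Alg0_ob := { X : C & { a : Hom (T0M X) X | is_ideal_alg a } }.
Definition Alg0_car (A : Alg0_ob) : C := projT1 A.
Definition Alg0_str (A : Alg0_ob) : Hom (T0M (Alg0_car A)) (Alg0_car A) :=
  proj1_sig (projT2 A).

Definition Alg0_hom (A B : Alg0_ob) :=
  { f : Hom (Alg0_car A) (Alg0_car B) | f \oc Alg0_str A = Alg0_str B \oc fmap T0M f }.

Lemma Tmap_id (X : C) : Tmap T0M (idm X) = idm (TX X).
Proof.
  unfold Tmap, Tobj. rewrite fmap_id, !comp_id_r. symmetry.
  apply copair_unique; rewrite comp_id_l; reflexivity.
Qed.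

Lemma Tmap_comp (X Y Z : C) (g : Hom Y Z) (f : Hom X Y) :
  Tmap T0M (g \oc f) = Tmap T0M g \oc Tmap T0M f.
Proof.
  unfold Tmap, Tobj. symmetry. apply copair_unique.
  - rewrite <- comp_assoc, copair_inl, comp_assoc, copair_inl, comp_assoc. reflexivity.
  - rewrite <- comp_assoc, copair_inr, comp_assoc, copair_inr, fmap_comp, comp_assoc.
    reflexivity.
Qed.

Definition EM_id (A : EM_ob) : EM_hom A A.
Proof.
  exists (idm _). rewrite Tmap_id, comp_id_l, comp_id_r. reflexivity.
Defined.

Definition EM_comp (A B D : EM_ob) (g : EM_hom B D) (f : EM_hom A B) : EM_hom A D.
Proof.
  exists (proj1_sig g \oc proj1_sig f).
  rewrite Tmap_comp, <- comp_assoc, (proj2_sig f), !comp_assoc, (proj2_sig g).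
  reflexivity.
Defined.

Definition EM_cat : Category.
Proof.
  refine {| Ob := EM_ob; Hom := EM_hom; idm := EM_id; comp := EM_comp |}.
  - intros A B [f Hf]. apply eq_sig_hprop; [intros; apply proof_irrelevance|].
    simpl. apply comp_id_l.
  - intros A B [f Hf]. apply eq_sig_hprop; [intros; apply proof_irrelevance|].
    simpl. apply comp_id_r.
  - intros A B D E h g f. apply eq_sig_hprop; [intros; apply proof_irrelevance|].
    simpl. apply comp_assoc.
Defined.

Definition Alg0_id (A : Alg0_ob) : Alg0_hom A A.
Proof.
  exists (idm _). rewrite fmap_id, comp_id_l, comp_id_r. reflexivity.
Defined.

Definition Alg0_comp (A B D : Alg0_ob) (g : Alg0_hom B D) (f : Alg0_hom A B)
  : Alg0_hom A D.
Proof.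
  exists (proj1_sig g \oc proj1_sig f).
  rewrite fmap_comp, <- comp_assoc, (proj2_sig f), !comp_assoc, (proj2_sig g).
  reflexivity.
Defined.

Definition Alg0_cat : Category.
Proof.
  refine {| Ob := Alg0_ob; Hom := Alg0_hom; idm := Alg0_id; comp := Alg0_comp |}.
  - intros A B [f Hf]. apply eq_sig_hprop; [intros; apply proof_irrelevance|].
    simpl. apply comp_id_l.
  - intros A B [f Hf]. apply eq_sig_hprop; [intros; apply proof_irrelevance|].
    simpl. apply comp_id_r.
  - intros A B D E h g f. apply eq_sig_hprop; [intros; apply proof_irrelevance|].
    simpl. apply comp_assoc.
Defined.

End IdealMonad.

(* Main.v *)
Require Import Defs.
From Stdlib Require Import ProofIrrelevance.
Set Implicit Arguments.
Unset Strict Implicit.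

Lemma copair_eta (C : FinCoprodCat) (X Y Z : C) (h : Hom (coprod X Y) Z) :
  h = copair (h \oc inl X Y) (h \oc inr X Y).
Proof. apply copair_unique; reflexivity. Qed.

Lemma copair_ext (C : FinCoprodCat) (X Y Z : C) (h1 h2 : Hom (coprod X Y) Z) :
  h1 \oc inl X Y = h2 \oc inl X Y -> h1 \oc inr X Y = h2 \oc inr X Y -> h1 = h2.
Proof.
  intros H1 H2. rewrite (copair_eta h1), (copair_eta h2), H1, H2. reflexivity.
Qed.

Lemma Tmap_inl (C : FinCoprodCat) (T : Functor C C) (X Y : C) (f : Hom X Y) :
  Tmap T f \oc inl X (T X) = inl Y (T Y) \oc f.
Proof. unfold Tmap. apply copair_inl. Qed.

Lemma Tmap_inr (C : FinCoprodCat) (T : Functor C C) (X Y : C) (f : Hom X Y) :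
  Tmap T f \oc inr X (T X) = inr Y (T Y) \oc fmap T f.
Proof. unfold Tmap. apply copair_inr. Qed.

Lemma EM_str_eta (C : FinCoprodCat) (M : IdealMonad C) (A : EM_ob M) :
  EM_str A = copair (idm _) (EM_str A \oc inr _ _).
Proof.
  transitivity (copair (EM_str A \oc inl _ _) (EM_str A \oc inr _ _)).
  - apply copair_eta.
  - f_equal. apply (proj1 (proj2_sig (projT2 A))).
Qed.

Lemma lemF (C : FinCoprodCat) (M : IdealMonad C) (A : EM_ob M) :
  is_ideal_alg (EM_str A \oc inr (EM_car A) (T0 M (EM_car A))).
Proof.
  unfold is_ideal_alg.
  rewrite <- EM_str_eta.
  destruct (proj2_sig (projT2 A)) as [_ H2]. fold (EM_str A) in H2.
  rewrite <- comp_assoc, <- (mu_inr M), comp_assoc.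
  change (Tobj (T0 M) (EM_car A)) with (Tobj (T0 M) (EM_car A)) in *.
  unfold EM_car in *. rewrite H2.
  rewrite <- comp_assoc, Tmap_inr, comp_assoc. reflexivity.
Qed.

Lemma lemG (C : FinCoprodCat) (M : IdealMonad C) (A : Alg0_ob M) :
  is_EM_alg (copair (idm _) (Alg0_str A)).
Proof.
  split.
  - apply copair_inl.
  - pose proof (proj2_sig (projT2 A)) as H. fold (Alg0_str A) in H.
    unfold is_ideal_alg in H.
    apply copair_ext.
    + rewrite <- !comp_assoc, (mu_eta_l M), Tmap_inl, comp_assoc, copair_inl,
        comp_id_l, comp_id_r. reflexivity.
    + rewrite <- !comp_assoc, (mu_inr M), Tmap_inr, !comp_assoc, !copair_inr.
      exact H.
Qed.

Lemma lemFm (C : FinCoprodCat) (M : IdealMonad C) (A B : EM_ob M) (f : EM_hom A B) :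
  proj1_sig f \oc (EM_str A \oc inr _ _) = (EM_str B \oc inr _ _) \oc fmap (T0 M) (proj1_sig f).
Proof.
  rewrite comp_assoc, (proj2_sig f), <- !comp_assoc, Tmap_inr. reflexivity.
Qed.

Lemma lemGm (C : FinCoprodCat) (M : IdealMonad C) (A B : Alg0_ob M) (f : Alg0_hom A B) :
  proj1_sig f \oc copair (idm _) (Alg0_str A)
  = copair (idm _) (Alg0_str B) \oc Tmap (T0 M) (proj1_sig f).
Proof.
  apply copair_ext; unfold Tmap, Tobj; rewrite <- !comp_assoc.
  - rewrite (copair_inl (idm _) (Alg0_str A)).
    rewrite (copair_inl (inl _ _ \oc proj1_sig f) (inr _ _ \oc fmap (T0 M) (proj1_sig f))).
    rewrite comp_assoc, (copair_inl (idm _) (Alg0_str B)), comp_id_l, comp_id_r. reflexivity.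
  - rewrite (copair_inr (idm _) (Alg0_str A)).
    rewrite (copair_inr (inl _ _ \oc proj1_sig f) (inr _ _ \oc fmap (T0 M) (proj1_sig f))).
    rewrite comp_assoc, (copair_inr (idm _) (Alg0_str B)). exact (proj2_sig f).
Qed.

Definition FFo (C : FinCoprodCat) (M : IdealMonad C) (A : EM_ob M) : Alg0_ob M :=
  existT _ (EM_car A) (exist _ (EM_str A \oc inr _ _) (lemF A)).
Definition GGo (C : FinCoprodCat) (M : IdealMonad C) (A : Alg0_ob M) : EM_ob M :=
  existT _ (Alg0_car A) (exist _ (copair (idm _) (Alg0_str A)) (lemG A)).

Definition FF (C : FinCoprodCat) (M : IdealMonad C) : Functor (EM_cat M) (Alg0_cat M).
Proof.
  refine {| fobj := (FFo (M:=M) : EM_cat M -> Alg0_cat M);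
            fmap := fun (A B : EM_ob M) (f : EM_hom A B) =>
              (exist _ (proj1_sig f) (lemFm f) : Alg0_hom (FFo A) (FFo B)) |}.
  - intros A. apply eq_sig_hprop; [intros; apply proof_irrelevance|]. reflexivity.
  - intros. apply eq_sig_hprop; [intros; apply proof_irrelevance|]. reflexivity.
Defined.

Definition GG (C : FinCoprodCat) (M : IdealMonad C) : Functor (Alg0_cat M) (EM_cat M).
Proof.
  refine {| fobj := (GGo (M:=M) : Alg0_cat M -> EM_cat M);
            fmap := fun (A B : Alg0_ob M) (f : Alg0_hom A B) =>
              (exist _ (proj1_sig f) (lemGm f) : EM_hom (GGo A) (GGo B)) |}.
  - intros A. apply eq_sig_hprop; [intros; apply proof_irrelevance|]. reflexivity.
  - intros. apply eq_sig_hprop; [intros; apply proof_irrelevance|]. reflexivity.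
Defined.

Definition mk_eq (A : Type) (B : A -> Type) (P : forall x, B x -> Prop) (X : A)
  (a a' : B X) (H : a = a') (pa : P X a) (pa' : P X a') :
  existT (fun x => {b : B x | P x b}) X (exist _ a pa)
  = existT (fun x => {b : B x | P x b}) X (exist _ a' pa') :=
  match H in _ = z return forall pz : P X z,
     existT (fun x => {b : B x | P x b}) X (exist _ a pa)
     = existT (fun x => {b : B x | P x b}) X (exist _ z pz) with
  | eq_refl => fun pz => match proof_irrelevance _ pa pz in _ = w return
       existT (fun x => {b : B x | P x b}) X (exist _ a pa)
       = existT (fun x => {b : B x | P x b}) X (exist _ a w) with
       | eq_refl => eq_refl end
  end pa'.

Lemma cast_EM (C : FinCoprodCat) (M : IdealMonad C) (X Y : C)
  (a a' : Hom (Tobj (T0 M) X) X) (b b' : Hom (Tobj (T0 M) Y) Y)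
  (Ha : a = a') (Hb : b = b') pa pa' pb pb' h :
  proj1_sig (@cast_hom (EM_cat M) _ _ _ _
     (@mk_eq C (fun X => Hom (Tobj (T0 M) X) X) (fun X a => is_EM_alg a) X a a' Ha pa pa')
     (@mk_eq C (fun X => Hom (Tobj (T0 M) X) X) (fun X a => is_EM_alg a) Y b b' Hb pb pb') h)
  = proj1_sig h.
Proof.
  destruct Ha, Hb. simpl.
  destruct (proof_irrelevance _ pa pa'). destruct (proof_irrelevance _ pb pb').
  reflexivity.
Qed.

Lemma cast_Alg (C : FinCoprodCat) (M : IdealMonad C) (X Y : C)
  (a a' : Hom (T0 M X) X) (b b' : Hom (T0 M Y) Y)
  (Ha : a = a') (Hb : b = b') pa pa' pb pb' h :
  proj1_sig (@cast_hom (Alg0_cat M) _ _ _ _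
     (@mk_eq C (fun X => Hom (T0 M X) X) (fun X a => is_ideal_alg a) X a a' Ha pa pa')
     (@mk_eq C (fun X => Hom (T0 M X) X) (fun X a => is_ideal_alg a) Y b b' Hb pb pb') h)
  = proj1_sig h.
Proof.
  destruct Ha, Hb. simpl.
  destruct (proof_irrelevance _ pa pa'). destruct (proof_irrelevance _ pb pb').
  reflexivity.
Qed.

Theorem lemma17 (C : FinCoprodCat) (M : IdealMonad C) :
  cat_isomorphic (EM_cat M) (Alg0_cat M).
Proof.
  exists (FF M), (GG M). split.
  - unshelve eexists.
    + intros [X [a pa]]. simpl.
      refine (@mk_eq C (fun X => Hom (Tobj (T0 M) X) X) (fun X a => is_EM_alg a)
                X _ _ _ _ _).
      exact (eq_sym (EM_str_eta (existT _ X (exist _ a pa)))).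
    + intros [X [a pa]] [Y [b pb]] f.
      apply eq_sig_hprop; [intros; apply proof_irrelevance|].
      simpl. etransitivity; [apply cast_EM|reflexivity].
  - unshelve eexists.
    + intros [X [a pa]]. simpl.
      refine (@mk_eq C (fun X => Hom (T0 M X) X) (fun X a => is_ideal_alg a)
                X _ _ _ _ _).
      apply copair_inr.
    + intros [X [a pa]] [Y [b pb]] f.
      apply eq_sig_hprop; [intros; apply proof_irrelevance|].
      simpl. etransitivity; [apply cast_Alg|reflexivity].
Qed.
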